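(* The code $\mathcal C_3(\mathbb D_d)$ is the $\mathbb F_3$-linear span of the vectors (functions of $t\in\mathbb F_{3^{2m}}$) \[ \mathrm{Tr}_{2m}(bt)\mathrm{Tr}_{2m}(b't),\quad \mathrm{Tr}_{2m}(bt),\quad \mathrm{Tr}_{2m}(at^{3^m+1})\mathrm{Tr}_{2m}(bt),\quad \mathrm{Tr}_{2m}(at^{3^m+1})\mathrm{Tr}_{2m}(a't^{3^m+1}),\quad \mathrm{Tr}_{2m}(at^{3^m+1}),\quad \mathbf 1, \] where $a,a'$ range over $\mathbb F_{3^m}^*$ and $b,b'$ range over $\mathbb F_{3^{2m}}$, and $\mathbf 1$ is the all-one vector.
   Context: Let $m\ge 2$ be an integer. For $s\in\{m,2m\}$ let $\mathrm{Tr}_s:\mathbb F_{3^s}\to\mathbb F_3$ denote the absolute trace. Vectors in $\mathbb F_3^{3^{2m}}$ are indexed by $\mathbb F_{3^{2m}}$, and a function $f:\mathbb F_{3^{2m}}\to\mathbb F_3$ is identified with $(f(t))_{t\in\mathbb F_{3^{2m}}}$; products are pointwise. Let $\mathcal C(2m,3)=\{(\mathrm{Tr}_{2m}(at^{3^m+1}+bt)+h)_{t\in\mathbb F_{3^{2m}}}: a\in\mathbb F_{3^m}, b\in\mathbb F_{3^{2m}}, h\in\mathbb F_3\}$, let $d$ be its minimum nonzero Hamming weight, let $\mathbb D_d$ be the incidence structure on $\mathbb F_{3^{2m}}$ whose blocks are the supports of the weight-$d$ codewords, and let $\mathcal C_3(\mathbb D_d)$ be the $\mathbb F_3$-span of the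 incidence vectors of the blocks (entry $1$ on the block, $0$ elsewhere). *)

(* Defs.v *)
From HB Require Import structures.
From mathcomp Require Import all_boot all_order all_algebra all_field.
Set Implicit Arguments. Unset Strict Implicit. Unset Printing Implicit Defensive.
Import GRing.Theory.
Local Open Scope ring_scope.

Section Defs.
Variable F : finFieldType.   (* intended: F = F_{3^{2m}} *)
Variable m : nat.

Definition vec := {ffun F -> 'F_3}.

Definition insub_m (a : F) : bool := a ^+ (3 ^ m) == a.

Definition TrF (x : F) : F := \sum_(i < 2 * m) x ^+ (3 ^ i).

(* the trace, read as an element of F_3 (identifying F_3 with the prime
   subfield of F via c |-> c%:R) *)
Definition Tr (x : F) : 'F_3 :=
  odflt 0 [pick c : 'F_3 | (nat_of_ord c)%:R == TrF x].

Definition wt (f : vec) : nat := #|[set t | f t != 0]|.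

Definition f3span (S : {set vec}) : {set vec} :=
  [set f | [exists lam : {ffun vec -> 'F_3},
     f == \sum_(g in S) [ffun t => lam g * g t]]].

Definition code : {set vec} :=
  [set f | [exists a : F, exists b : F, exists h : 'F_3,
     insub_m a && (f == [ffun t => Tr (a * t ^+ (3 ^ m + 1) + b * t) + h])]].

Definition minwords : {set vec} :=
  [set c in code | (c != 0) && [forall c' in code, (c' != 0) ==> (wt c <= wt c')%N]].

Definition blocks : {set {set F}} := [set [set t | c t != 0] | c : vec in minwords].

Definition incid (B : {set F}) : vec := [ffun t => (t \in B)%:R : 'F_3].

Definition design_code : {set vec} := f3span [set incid B | B in blocks].

Definition gens : {set vec} :=
  [set f | [exists b : F, exists b' : F,
               f == [ffun t => Tr (b * t) * Tr (b' * t)]]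
        || [exists b : F, f == [ffun t => Tr (b * t)]]
        || [exists a : F, exists b : F,
               [&& insub_m a, a != 0 &
                f == [ffun t => Tr (a * t ^+ (3 ^ m + 1)) * Tr (b * t)]]]
        || [exists a : F, exists a' : F,
               [&& insub_m a, a != 0, insub_m a', a' != 0 &
                f == [ffun t => Tr (a * t ^+ (3 ^ m + 1)) * Tr (a' * t ^+ (3 ^ m + 1))]]]
        || [exists a : F,
               [&& insub_m a, a != 0 & f == [ffun t => Tr (a * t ^+ (3 ^ m + 1))]]]
        || (f == [ffun => 1])].

End Defs.

(* Main.v *)
Require Import Defs.
From HB Require Import structures.
From mathcomp Require Import all_boot all_order all_algebra all_field.
From mathcomp Require Import ring zify.
Import GRing.Theory.
Local Open Scope ring_scope.

Set Implicit Arguments.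
Unset Strict Implicit.

Section Span.
Variable F : finFieldType.
Variable m : nat.
Implicit Types S : {set vec F}.

Lemma span_eq S (f g : vec F) : f \in f3span S -> (forall t, f t = g t) -> g \in f3span S.
Proof. by move=> Hf E; have -> : g = f by apply/ffunP => t; rewrite E. Qed.

Lemma span_mem S (f : vec F) : (exists lam : {ffun vec F -> 'F_3},
   forall t, f t = \sum_(g in S) lam g * g t) -> f \in f3span S.
Proof.
move=> [lam H]; rewrite inE; apply/existsP; exists lam; apply/eqP/ffunP => t.
by rewrite H sum_ffun ffunE; apply: eq_bigr => g _; rewrite ffunE.
Qed.

Lemma span_memP S (f : vec F) : f \in f3span S -> exists lam : {ffun vec F -> 'F_3},
   forall t, f t = \sum_(g in S) lam g * g t.
Proof.
rewrite inE => /existsP [lam /eqP ->]; exists lam => t.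
by rewrite sum_ffun ffunE; apply: eq_bigr => g _; rewrite ffunE.
Qed.

Lemma span0 S : [ffun => 0] \in f3span S.
Proof.
apply: span_mem; exists [ffun => 0] => t.
by rewrite ffunE big1 // => g _; rewrite ffunE mul0r.
Qed.

Lemma spanD S (f g : vec F) : f \in f3span S -> g \in f3span S ->
  [ffun t => f t + g t] \in f3span S.
Proof.
move=> /span_memP [l1 H1] /span_memP [l2 H2]; apply: span_mem.
exists [ffun h => l1 h + l2 h] => t; rewrite ffunE H1 H2 -big_split.
by apply: eq_bigr => h _; rewrite ffunE mulrDl.
Qed.

Lemma spanZ S k (f : vec F) : f \in f3span S -> [ffun t => k * f t] \in f3span S.
Proof.
move=> /span_memP [l1 H1]; apply: span_mem.
exists [ffun h => k * l1 h] => t; rewrite ffunE H1 mulr_sumr.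
by apply: eq_bigr => h _; rewrite ffunE mulrA.
Qed.

Lemma spanG S (g : vec F) : g \in S -> g \in f3span S.
Proof.
move=> gS; apply: span_mem; exists [ffun h => ((h == g) : nat)%:R] => t.
rewrite (bigD1 g) //= ffunE eqxx mul1r big1 ?addr0 // => h /andP [_ ne].
by rewrite ffunE (negbTE ne) mul0r.
Qed.

Lemma span_comb S (fs : seq ('F_3 * vec F)) :
  all (fun p => p.2 \in f3span S) fs ->
  [ffun t => \sum_(p <- fs) p.1 * p.2 t] \in f3span S.
Proof.
elim: fs => [|p fs IH] /=.
  by move=> _; apply: span_eq (span0 S) _ => t; rewrite !ffunE big_nil.
move=> /andP [hp /IH hfs]; apply: span_eq (spanD (spanZ p.1 hp) hfs) _ => t.
by rewrite !ffunE big_cons.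
Qed.

Lemma span_sub S T : {subset S <= f3span T} -> {subset f3span S <= f3span T}.
Proof.
move=> sub f /span_memP [lam H].
have : all (fun g => g \in f3span T) (enum S) by apply/allP => g; rewrite mem_enum => /sub.
have : forall s : seq (vec F), all (fun g => g \in f3span T) s ->
    [ffun t => \sum_(g <- s) lam g * g t] \in f3span T.
  elim => [|g gs IH] /=.
    by move=> _; apply: span_eq (span0 T) _ => t; rewrite !ffunE big_nil.
  move=> /andP [hg /IH hgs]; apply: span_eq (spanD (spanZ (lam g) hg) hgs) _ => t.
  by rewrite !ffunE big_cons.
move=> gen /gen h; apply: span_eq h _ => t; rewrite ffunE H.
by rewrite big_enum.
Qed.
End Span.

Lemma F3_all (P : 'F_3 -> Prop) : P 0 -> P 1 -> P (1+1) -> forall x, P x.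
Proof.
move=> P0 P1 P2 [[|[|[|n]]] Hn] //.
- by have -> : Ordinal Hn = 0 by apply/val_inj.
- by have -> : Ordinal Hn = 1 by apply/val_inj.
- by have -> : Ordinal Hn = 1+1 by apply/val_inj.
Qed.

Ltac genTr := repeat match goal with |- context [@Tr ?F ?m ?e] =>
  let x := fresh "x" in set x := @Tr F m e; clearbody x end.
Ltac revF3 := repeat match goal with x : ?T |- _ => unify T ('F_3 : Type); revert x end.
Lemma F3_cases (x : 'F_3) : [\/ x = 0, x = 1 | x = 1 + 1].
Proof. by move: x; apply: F3_all; [apply: Or31 | apply: Or32 | apply: Or33]. Qed.
Ltac allD := repeat (apply/andP; split); try exact: isT.
Ltac f3 := genTr; revF3;
  repeat (let x := fresh "x" in move=> x; case: (F3_cases x) => ->; clear x);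
  apply/eqP; by [].

Section Basics.
Variable F : finFieldType.
Variable m : nat.
Hypothesis m2 : (2 <= m)%N.
Hypothesis ch3 : 3%N \in [pchar F].
Hypothesis cardF : #|F| = (3 ^ (2 * m))%N.

Lemma char3 : (3%:R : F) = 0.
Proof. exact: pcharf0 ch3. Qed.

Lemma frobk (x y : F) k : (x + y) ^+ (3 ^ k) = x ^+ (3 ^ k) + y ^+ (3 ^ k).
Proof.
apply: exprDn_pchar; rewrite pnatX; apply/orP; left.
by rewrite pnatE //.
Qed.

Lemma frobM (x y : F) k : (x * y) ^+ k = x ^+ k * y ^+ k.
Proof. by rewrite exprMn. Qed.

Lemma expqq (x : F) : x ^+ (3 ^ m * 3 ^ m) = x.
Proof. by rewrite -expnD addnn -mul2n -cardF expf_card. Qed.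

Lemma expq_q (x : F) : (x ^+ (3 ^ m)) ^+ (3 ^ m) = x.
Proof. by rewrite -exprM expqq. Qed.

Lemma natr_mod3 (n n' : nat) : n = n' %[mod 3] -> (n%:R : F) = n'%:R.
Proof.
move=> H; rewrite (divn_eq n 3) (divn_eq n' 3) H !natrD !natrM char3 !mulr0.
by rewrite !add0r.
Qed.

Definition io (u : 'F_3) : F := (nat_of_ord u)%:R.

Lemma ioD u v : io (u + v) = io u + io v.
Proof.
rewrite /io -natrD; apply: natr_mod3.
move: u v; do 2! apply: F3_all; by [].
Qed.

Lemma two_neq0 : (2%:R : F) != 0.
Proof.
apply/eqP=> H; have : (1%:R : F) = 0.
  by rewrite -(@natr_mod3 4 1) // (natrD _ 2 2) H addr0.
by move/eqP; rewrite oner_eq0.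
Qed.

Lemma io0 : io 0 = 0. Proof. by []. Qed.
Lemma io1 : io 1 = 1. Proof. by rewrite /io; have -> : nat_of_ord (1 : 'F_3) = 1%N by []. Qed.
Lemma io2 : io (1+1) = 2%:R. Proof. by rewrite /io; have -> : nat_of_ord (1 + 1 : 'F_3) = 2%N by []. Qed.

Lemma io_inj : injective io.
Proof.
have h1 : (1 : F) != 0 by rewrite oner_eq0.
have h2 := two_neq0.
have h21 : (2%:R : F) != 1.
  by apply: contra h1; rewrite (natrD _ 1 1) -subr_eq0 addrK.
move=> u v; move: u v; do 2! apply: F3_all; rewrite ?io0 ?io1 ?io2 //.
all: move/eqP; rewrite ?(eq_sym 0) ?(negbTE h1) ?(negbTE h2) ?(negbTE h21) //.
by rewrite eq_sym (negbTE h21).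
Qed.

Lemma card3 : #|F| = (3 ^ (2 * m))%N. Proof. exact: cardF. Qed.

Lemma TrFD (x y : F) : TrF m (x + y) = TrF m x + TrF m y.
Proof. by rewrite /TrF -big_split; apply: eq_bigr => i _; exact: frobk. Qed.

Lemma TrF3 (x : F) : TrF m (x ^+ 3) = TrF m x.
Proof.
rewrite /TrF; have [n hn] : exists n, (2 * m)%N = n.+1 by exists (2 * m).-1; rewrite prednK // muln_gt0; case: m m2.
rewrite hn big_ord_recr big_ord_recl /= addrC; congr (_ + _).
  by rewrite -exprM -expnS -hn -cardF expf_card expn0 expr1.
by apply: eq_bigr => i _; rewrite -exprM -expnS.
Qed.

Lemma TrF3k (x : F) k : TrF m (x ^+ (3 ^ k)) = TrF m x.
Proof. elim: k => [|k IH]; first by rewrite expr1. by rewrite expnSr exprM TrF3. Qed.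

Lemma TrF_cube (x : F) : TrF m x ^+ 3 = TrF m x.
Proof.
rewrite -[LHS](pFrobenius_autE ch3) rmorph_sum /=.
rewrite -[RHS](TrF3 x) /TrF; apply: eq_bigr => i _.
by rewrite pFrobenius_autE exprAC.
Qed.

Lemma io_m1 : io (1 + 1) = - 1.
Proof.
by rewrite io2; apply/eqP; rewrite -subr_eq0 opprK natr1 char3.
Qed.

Lemma TrF_in (x : F) : exists u, io u = TrF m x.
Proof.
set y := TrF m x.
have : y * (y - 1) * (y + 1) = 0.
  have -> : y * (y - 1) * (y + 1) = y ^+ 3 - y by ring.
  by rewrite TrF_cube subrr.
move/eqP; rewrite !mulf_eq0 => /orP [/orP [] | ] /eqP H.
- by exists 0; rewrite io0 H.
- by exists 1; rewrite io1; apply/eqP; rewrite eq_sym -subr_eq0 H.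
- by exists (1 + 1); rewrite io_m1; apply/eqP; rewrite eq_sym -subr_eq0 opprK H.
Qed.

Lemma ioTr (x : F) : io (Tr m x) = TrF m x.
Proof.
rewrite /Tr; case: pickP => [u /eqP // | H].
by have [u hu] := TrF_in x; move: (H u); rewrite /io in hu *; rewrite hu eqxx.
Qed.

Lemma TrE (x : F) u : (Tr m x == u) = (TrF m x == io u).
Proof.
apply/eqP/eqP => [<- | H]; first by rewrite ioTr.
by apply: io_inj; rewrite ioTr.
Qed.

Lemma TrD (x y : F) : Tr m (x + y) = Tr m x + Tr m y.
Proof. by apply: io_inj; rewrite ioD !ioTr TrFD. Qed.

Lemma Tr0 : Tr m (0 : F) = 0.
Proof. have H := TrD 0 0; rewrite addr0 in H. by apply: (addrI (Tr m (0:F))); rewrite -H addr0. Qed.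

Lemma TrN (x : F) : Tr m (- x) = - Tr m x.
Proof. by apply/eqP; rewrite -subr_eq0 opprK -TrD addNr Tr0. Qed.

Lemma Tr3k (x : F) k : Tr m (x ^+ (3 ^ k)) = Tr m x.
Proof. by apply: io_inj; rewrite !ioTr TrF3k. Qed.

Lemma KEY (a t c : F) : a ^+ (3 ^ m) = a ->
  Tr m (a * (t + c) ^+ (3 ^ m + 1)) =
  Tr m (a * t ^+ (3 ^ m + 1)) + Tr m (a * c ^+ (3 ^ m) * t) + Tr m (a * c ^+ (3 ^ m) * t)
  + Tr m (a * c ^+ (3 ^ m + 1)).
Proof.
move=> aq.
have E : a * (t + c) ^+ (3 ^ m + 1) = a * t ^+ (3 ^ m + 1) + (a * c ^+ (3 ^ m) * t) ^+ (3 ^ m)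
    + a * c ^+ (3 ^ m) * t + a * c ^+ (3 ^ m + 1).
  rewrite !exprMn aq expq_q addn1 !exprSr frobk; ring.
by rewrite E !TrD Tr3k.
Qed.

Lemma roots_lt (p : {poly F}) : p != 0 -> (#|[set x | root p x]| < size p)%N.
Proof.
move=> p0; rewrite cardE; apply: max_poly_roots => //; last exact: enum_uniq.
by apply/allP => x; rewrite mem_enum inE.
Qed.

Lemma tpoly (n : nat) (c : nat -> F) (k : F) : (0 < n)%N -> c n.-1 != 0 ->
  leq #|[set x : F | \sum_(i < n) c i * x ^+ (3 ^ i) == k]| (3 ^ n.-1).
Proof.
move=> n0 cn.
pose P : {poly F} := \sum_(i < n) c i *: 'X^(3 ^ i) - k%:P.
have hP (x : F) : root P x = (\sum_(i < n) c i * x ^+ (3 ^ i) == k).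
  rewrite rootE /P hornerD hornerN hornerC horner_sum subr_eq0.
  by apply/eqP/eqP => <-; apply: eq_bigr => i _; rewrite hornerZ hornerXn.
have cP j : P`_j = \sum_(i < n) c i * ((j == 3 ^ i)%N)%:R - k * ((j == 0)%N)%:R.
  rewrite /P coefB coef_sum coefC; congr (_ - _).
    by apply: eq_bigr => i _; rewrite coefZ coefXn.
  by case: (j == 0)%N; rewrite ?mulr1 ?mulr0.
have Pn0 : P != 0.
  apply/eqP => /(congr1 (fun p : {poly F} => p`_(3 ^ n.-1))); rewrite cP coef0.
  have -> : (3 ^ n.-1 == 0)%N = false by rewrite eqn0Ngt expn_gt0.
  rewrite mulr0 subr0 (bigD1 (Ordinal (n:=n) (m:=n.-1) (etrans (ltn_predL n) n0))) //= eqxx mulr1 big1 ?addr0.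
    by move/eqP; rewrite (negbTE cn).
  move=> i /negbTE; rewrite eqn_exp2l // => ni.
  by rewrite -val_eqE /= eq_sym in ni; rewrite ni mulr0.
have sP : (size P <= (3 ^ n.-1).+1)%N.
  apply/leq_sizeP => j hj; rewrite cP big1.
    have -> : (j == 0)%N = false by case: j hj.
    by rewrite mulr0 subr0.
  move=> i _; have -> : (j == 3 ^ i)%N = false; last by rewrite mulr0.
  apply/negbTE; rewrite neq_ltn; apply/orP; right.
  apply: leq_trans hj; rewrite ltnS leq_pexp2l //.
  by rewrite -ltnS prednK.
have := @roots_lt _ Pn0.
have -> : [set x | root P x] = [set x : F | \sum_(i < n) c i * x ^+ (3 ^ i) == k].
  by apply/setP => x; rewrite !inE hP.
move=> h; rewrite -ltnS; exact: leq_trans h sP.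
Qed.

Lemma normfib (y : F) : leq #|[set t : F | t ^+ (3 ^ m + 1) == y]| (3 ^ m + 1).
Proof.
have Pn0 : ('X^(3 ^ m + 1) - y%:P : {poly F}) != 0.
  by rewrite -size_poly_eq0 size_XnsubC // addn1.
have := @roots_lt _ Pn0; rewrite size_XnsubC ?addn1 // ltnS.
have -> : [set x : F | root ('X^((3 ^ m).+1) - y%:P) x] = [set t : F | t ^+ ((3 ^ m).+1) == y].
  by apply/setP => x; rewrite !inE rootE hornerD hornerN hornerC hornerXn subr_eq0.
by [].
Qed.

Lemma trsub (a y : F) : a ^+ (3 ^ m) = a -> y ^+ (3 ^ m) = y ->
  TrF m (a * y) = \sum_(i < m) (2%:R * a ^+ (3 ^ i)) * y ^+ (3 ^ i).
Proof.
move=> aq yq; rewrite /TrF mul2n -addnn big_split_ord /= -big_split /=.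
apply: eq_bigr => i _.
by rewrite expnD exprM [(a * y) ^+ (3 ^ m)]exprMn aq yq exprMn; ring.
Qed.

Lemma fibq (a : F) u : a ^+ (3 ^ m) = a -> a != 0 ->
  leq #|[set y : F | (y ^+ (3 ^ m) == y) && (Tr m (a * y) == u)]| (3 ^ m.-1).
Proof.
move=> aq a0.
apply: leq_trans _ (@tpoly m (fun i => 2%:R * a ^+ (3 ^ i)) (io u) _ _); first last.
- by rewrite mulf_neq0 ?two_neq0 // expf_neq0.
- by case: m m2.
apply: subset_leq_card; apply/subsetP => y; rewrite !inE => /andP [/eqP yq].
by rewrite TrE trsub.
Qed.

Lemma Lbound (b : F) u : b != 0 ->
  leq #|[set t : F | Tr m (b * t) == u]| (3 ^ (2 * m).-1).
Proof.
move=> b0.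
apply: leq_trans _ (@tpoly (2 * m)%N (fun i => b ^+ (3 ^ i)) (io u) _ _); first last.
- by rewrite expf_neq0.
- by rewrite muln_gt0; case: m m2.
apply: subset_leq_card; apply/subsetP => y; rewrite !inE TrE /TrF.
by under eq_bigr do rewrite exprMn.
Qed.

Lemma sum_fib (g : F -> 'F_3) : (\sum_(u : 'F_3) #|[set t : F | g t == u]|)%N = #|F|.
Proof.
rewrite -sum1_card (partition_big g xpredT) //.
apply: eq_bigr => u _; rewrite -sum1_card; apply: eq_bigl => t; by rewrite inE.
Qed.

Lemma pigeon (Z K : 'F_3 -> nat) : (forall u, Z u <= K u)%N ->
  (\sum_u Z u)%N = (\sum_u K u)%N -> forall u, Z u = K u.
Proof.
move=> le E u; apply/eqP; rewrite eqn_leq le /=; rewrite leqNgt; apply/negP => lt.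
have : (\sum_u Z u < \sum_u K u)%N.
  rewrite (bigD1 u) //= [X in (_ < X)%N](bigD1 u) //=.
  by rewrite -addSn leq_add // leq_sum.
by rewrite E ltnn.
Qed.

Definition Kf (u : 'F_3) : nat :=
  if u == 0 then (1 + (3 ^ m + 1) * (3 ^ m.-1 - 1))%N else ((3 ^ m + 1) * 3 ^ m.-1)%N.

Lemma Nq (t : F) : (t ^+ (3 ^ m + 1)) ^+ (3 ^ m) = t ^+ (3 ^ m + 1).
Proof. by rewrite -exprM mulnDl mul1n exprD expqq [RHS]exprD expr1 mulrC. Qed.

Lemma Zbound (a : F) u : a ^+ (3 ^ m) = a -> a != 0 ->
  leq #|[set t : F | Tr m (a * t ^+ (3 ^ m + 1)) == u]| (Kf u).
Proof.
move=> aq a0.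
set A := [set t : F | _].
set S := [set y : F | [&& y != 0, y ^+ (3 ^ m) == y & Tr m (a * y) == u]].
have h0 : (0 \in A) = (u == 0).
  by rewrite inE expr0n addn1 /= mulr0 Tr0 eq_sym.
have hA : leq #|A :\ 0| (#|S| * (3 ^ m + 1)).
  rewrite -sum1_card (partition_big (fun t => t ^+ (3 ^ m + 1)) (mem S)) /=; last first.
    move=> t; rewrite !inE => /andP [t0 Ht].
    by rewrite expf_neq0 // Nq eqxx Ht.
  rewrite -sum_nat_const; apply: leq_sum => y _.
  rewrite sum1dep_card; apply: leq_trans (normfib y).
  by apply: subset_leq_card; apply/subsetP => t; rewrite !inE => /andP [].
set B := [set y : F | (y ^+ (3 ^ m) == y) && (Tr m (a * y) == u)].
have hB := @fibq a u aq a0; rewrite -/B in hB.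
rewrite (cardsD1 0 A) h0 /Kf.
case: eqP => [u0 | u0] /=.
  have hS : leq #|S| (3 ^ m.-1 - 1).
    have B0 : 0 \in B by rewrite inE expr0n expn_eq0 /= mulr0 Tr0 u0 !eqxx.
    have := cardsD1 0 B; rewrite B0 => hB1.
    have : leq #|S| #|B :\ 0|.
      by apply: subset_leq_card; apply/subsetP => y; rewrite !inE => /and3P [-> -> ->].
    move=> h; apply: leq_trans h _; rewrite /= in hB1.
    move: hB hB1; move: #|B| #|B :\ 0| (3 ^ m.-1)%N => x y z; lia.
  rewrite /= add1n ltnS; apply: leq_trans hA _; rewrite mulnC leq_mul2l hS orbT //.
rewrite add0n; apply: leq_trans hA _; rewrite mulnC leq_mul2l; apply/orP; right.
apply: leq_trans hB; apply: subset_leq_card; apply/subsetP => y.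
by rewrite !inE => /and3P [_ -> ->].
Qed.

Lemma hq : (3 ^ m = 3 * 3 ^ m.-1)%N.
Proof. by rewrite -expnS prednK //; case: m m2. Qed.

Lemma sumK : (\sum_(u : 'F_3) Kf u)%N = #|F|.
Proof.
rewrite (bigD1 0) //= /Kf eqxx.
rewrite (eq_bigr (fun=> ((3 ^ m + 1) * 3 ^ m.-1)%N)); last first.
  by move=> u /negbTE ->.
rewrite sum_nat_const cardC1 card_Fp // cardF mul2n -addnn expnD hq.
have r1 : (0 < 3 ^ m.-1)%N by rewrite expn_gt0.
move: (3 ^ m.-1)%N r1 => r r1 /=; nia.
Qed.

Lemma Zexact (a : F) u : a ^+ (3 ^ m) = a -> a != 0 ->
  #|[set t : F | Tr m (a * t ^+ (3 ^ m + 1)) == u]| = Kf u.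
Proof.
move=> aq a0.
apply: (@pigeon (fun u => #|[set t : F | Tr m (a * t ^+ (3 ^ m + 1)) == u]|) Kf).
  by move=> v; exact: Zbound.
by rewrite sum_fib sumK.
Qed.

Lemma negq (c : F) : (- c) ^+ (3 ^ m) = - c ^+ (3 ^ m).
Proof.
by apply/eqP; rewrite -addr_eq0 -frobk addNr expr0n expn_eq0.
Qed.

Lemma KEYm (a t c : F) : a ^+ (3 ^ m) = a ->
  Tr m (a * (t + - c) ^+ (3 ^ m + 1)) =
  Tr m (a * t ^+ (3 ^ m + 1)) - Tr m (a * c ^+ (3 ^ m) * t) - Tr m (a * c ^+ (3 ^ m) * t)
  + Tr m (a * c ^+ (3 ^ m + 1)).
Proof.
move=> aq; rewrite KEY // negq.
have -> : (- c) ^+ (3 ^ m + 1) = c ^+ (3 ^ m + 1).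
  by rewrite addn1 exprSr negq mulrNN -exprSr.
by rewrite mulrN mulNr TrN.
Qed.

Lemma wtE (f : vec F) : wt f = subn #|F| #|[set t | f t == 0]|.
Proof.
rewrite -(cardsC [set t | f t == 0]) addKn /wt.
by apply: eq_card => t; rewrite !inE.
Qed.

Lemma shiftcard (P : pred F) (c : F) : #|[set t | P (t + c)]| = #|[set t | P t]|.
Proof.
rewrite -(card_preimset _ (addIr c)).
by apply: eq_card => t; rewrite !inE.
Qed.

Lemma Kf_le u : leq (Kf u) (Kf 1).
Proof.
rewrite /Kf; have -> : ((1 : 'F_3) == 0) = false by [].
case: (u == 0) => //.
have r1 : (0 < 3 ^ m.-1)%N by rewrite expn_gt0.
move: (3 ^ m)%N (3 ^ m.-1)%N r1 => x r r1; nia.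
Qed.

Lemma Kf_neq0 u : u != 0 -> Kf u = Kf 1.
Proof. by rewrite /Kf => /negbTE ->. Qed.

Lemma codeZ (a b : F) h : a ^+ (3 ^ m) = a ->
  [ffun t => Tr m (a * t ^+ (3 ^ m + 1) + b * t) + h] != 0 ->
  leq #|[set t | [ffun t => Tr m (a * t ^+ (3 ^ m + 1) + b * t) + h] t == 0]| (Kf 1).
Proof.
move=> aq fn0.
have -> : [set t | [ffun t => Tr m (a * t ^+ (3 ^ m + 1) + b * t) + h] t == 0] =
   [set t : F | Tr m (a * t ^+ (3 ^ m + 1) + b * t) + h == 0].
  by apply/setP => t; rewrite !inE ffunE.
case: (eqVneq a 0) => [a0 | a0].
  subst a.
  case: (eqVneq b 0) => [b0 | b0].
    subst b.
    have h0 : h != 0.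
      apply: contra fn0 => /eqP h0; apply/eqP/ffunP => t.
      by rewrite !ffunE !mul0r addr0 Tr0 h0 add0r.
    have -> : [set t : F | Tr m (0 * t ^+ (3 ^ m + 1) + 0 * t) + h == 0] = set0.
      by apply/setP => t; rewrite !inE !mul0r addr0 Tr0 add0r (negbTE h0).
    by rewrite cards0.
  have -> : [set t : F | Tr m (0 * t ^+ (3 ^ m + 1) + b * t) + h == 0] =
      [set t : F | Tr m (b * t) == - h].
    by apply/setP => t; rewrite !inE !mul0r add0r addr_eq0.
  apply: leq_trans (Lbound (- h) b0) _.
  have -> : ((2 * m).-1 = m + m.-1)%N by move: m2; clear; lia.
  rewrite expnD /Kf; have -> : ((1 : 'F_3) == 0) = false by [].
  rewrite /= hq; move: (3 ^ m.-1)%N => r; nia.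
pose c := (b / (2%:R * a)) ^+ (3 ^ m).
have hc : a * c ^+ (3 ^ m) = b / 2%:R.
  rewrite /c expq_q; field; rewrite a0 two_neq0 //.
pose k := Tr m (a * c ^+ (3 ^ m + 1)).
have key t : Tr m (a * t ^+ (3 ^ m + 1) + b * t) + h =
    Tr m (a * (t + c) ^+ (3 ^ m + 1)) + (h - k).
  rewrite KEY // hc.
  have e2 : b * t = b / 2%:R * t + b / 2%:R * t by field; rewrite two_neq0.
  rewrite TrD e2 !TrD /k; ring.
have -> : [set t : F | Tr m (a * t ^+ (3 ^ m + 1) + b * t) + h == 0] =
    [set t : F | (fun s => Tr m (a * s ^+ (3 ^ m + 1)) == k - h) (t + c)].
  by apply/setP => t; rewrite !inE key addr_eq0 opprB.
rewrite (shiftcard (fun s => Tr m (a * s ^+ (3 ^ m + 1)) == k - h) c) Zexact //; exact: Kf_le.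
Qed.

Lemma minw (a c : F) h : a ^+ (3 ^ m) = a -> a != 0 -> h != 0 ->
  [ffun t => Tr m (a * (t + c) ^+ (3 ^ m + 1)) + h] \in minwords F m.
Proof.
move=> aq a0 h0.
set w := [ffun t => _].
have wcode : w \in code F m.
  rewrite inE; apply/existsP; exists a; apply/existsP; exists (a * c ^+ (3 ^ m) + a * c ^+ (3 ^ m)).
  apply/existsP; exists (Tr m (a * c ^+ (3 ^ m + 1)) + h).
  rewrite /insub_m aq eqxx /=; apply/eqP/ffunP => t; rewrite !ffunE KEY // mulrDl !TrD; ring.
rewrite inE wcode /=; apply/andP; split.
  apply/eqP => /ffunP /(_ (- c)); rewrite !ffunE addNr expr0n addn1 /= mulr0 Tr0 add0r.
  by move/eqP; rewrite (negbTE h0).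
apply/forall_inP => c' c'code; apply/implyP => c'n0.
rewrite !wtE; apply: leq_sub2l.
have -> : [set t | w t == 0] = [set t : F | (fun s => Tr m (a * s ^+ (3 ^ m + 1)) == - h) (t + c)].
  by apply/setP => t; rewrite !inE ffunE addr_eq0.
rewrite (shiftcard (fun s => Tr m (a * s ^+ (3 ^ m + 1)) == - h) c) Zexact // Kf_neq0 ?oppr_eq0 //.
move: c'code c'n0; rewrite inE => /existsP [a' /existsP [b' /existsP [h' /andP [/eqP a'q /eqP ->]]]].
exact: codeZ.
Qed.

Lemma gen1 (b b' : F) : [ffun t => Tr m (b * t) * Tr m (b' * t)] \in gens F m.
Proof.
rewrite inE; do 5! (apply/orP; left).
by apply/existsP; exists b; apply/existsP; exists b'.
Qed.

Lemma gen2 (b : F) : [ffun t => Tr m (b * t)] \in gens F m.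
Proof.
rewrite inE; do 4! (apply/orP; left); apply/orP; right.
by apply/existsP; exists b.
Qed.

Lemma gen3 (a b : F) : a ^+ (3 ^ m) = a -> a != 0 ->
  [ffun t => Tr m (a * t ^+ (3 ^ m + 1)) * Tr m (b * t)] \in gens F m.
Proof.
move=> aq a0; rewrite inE; do 3! (apply/orP; left); apply/orP; right.
by apply/existsP; exists a; apply/existsP; exists b; rewrite /insub_m aq !eqxx a0.
Qed.

Lemma gen4 (a a' : F) : a ^+ (3 ^ m) = a -> a != 0 -> a' ^+ (3 ^ m) = a' -> a' != 0 ->
  [ffun t => Tr m (a * t ^+ (3 ^ m + 1)) * Tr m (a' * t ^+ (3 ^ m + 1))] \in gens F m.
Proof.
move=> aq a0 aq' a0'; rewrite inE; do 2! (apply/orP; left); apply/orP; right.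
by apply/existsP; exists a; apply/existsP; exists a'; rewrite /insub_m aq aq' !eqxx a0 a0'.
Qed.

Lemma gen5 (a : F) : a ^+ (3 ^ m) = a -> a != 0 ->
  [ffun t => Tr m (a * t ^+ (3 ^ m + 1))] \in gens F m.
Proof.
move=> aq a0; rewrite inE; apply/orP; left; apply/orP; right.
by apply/existsP; exists a; rewrite /insub_m aq !eqxx a0.
Qed.

Lemma gen6 : [ffun=> 1] \in gens F m.
Proof. by rewrite inE; apply/orP; right. Qed.

Let G := f3span (gens F m).

Lemma GQ (a : F) : a ^+ (3 ^ m) = a -> [ffun t => Tr m (a * t ^+ (3 ^ m + 1))] \in G.
Proof.
move=> aq; case: (eqVneq a 0) => [-> | a0]; last by apply: spanG; apply: gen5.
by apply: span_eq (span0 _) _ => t; rewrite !ffunE mul0r Tr0.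
Qed.

Lemma GQQ (a a' : F) : a ^+ (3 ^ m) = a -> a' ^+ (3 ^ m) = a' ->
  [ffun t => Tr m (a * t ^+ (3 ^ m + 1)) * Tr m (a' * t ^+ (3 ^ m + 1))] \in G.
Proof.
move=> aq aq'; case: (eqVneq a 0) => [-> | a0].
  by apply: span_eq (span0 _) _ => t; rewrite !ffunE mul0r Tr0 mul0r.
case: (eqVneq a' 0) => [-> | a0']; last by apply: spanG; apply: gen4.
by apply: span_eq (span0 _) _ => t; rewrite !ffunE mul0r Tr0 mulr0.
Qed.

Lemma GQL (a b : F) : a ^+ (3 ^ m) = a ->
  [ffun t => Tr m (a * t ^+ (3 ^ m + 1)) * Tr m (b * t)] \in G.
Proof.
move=> aq; case: (eqVneq a 0) => [-> | a0]; last by apply: spanG; apply: gen3.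
by apply: span_eq (span0 _) _ => t; rewrite !ffunE mul0r Tr0 mul0r.
Qed.

Lemma sqE (x : 'F_3) : ((x != 0) : nat)%:R = x ^+ 2.
Proof. by move: x; apply: F3_all; apply/eqP. Qed.

Lemma dir1 : {subset [set incid B | B in blocks F m] <= G}.
Proof.
move=> f /imsetP [B /imsetP [w wmin ->] ->].
move: wmin; rewrite inE => /andP [wcode _].
move: wcode; rewrite inE => /existsP [a /existsP [b /existsP [h /andP [/eqP aq /eqP ->]]]].
apply: span_eq (span_comb (fs := [:: (1, [ffun t => Tr m (a * t ^+ (3 ^ m + 1)) * Tr m (a * t ^+ (3 ^ m + 1))]);
   (1, [ffun t => Tr m (b * t) * Tr m (b * t)]); (h ^+ 2, [ffun => 1]);
   (1 + 1, [ffun t => Tr m (a * t ^+ (3 ^ m + 1)) * Tr m (b * t)]);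
   ((1 + 1) * h, [ffun t => Tr m (a * t ^+ (3 ^ m + 1))]);
   ((1 + 1) * h, [ffun t => Tr m (b * t)])]) _) _.
  by rewrite /= (GQQ aq aq) (spanG (gen1 b b)) (spanG gen6) (GQL b aq) (GQ aq) (spanG (gen2 b)).
move=> t; rewrite !ffunE !big_cons big_nil /= !ffunE inE ffunE sqE TrD.
f3.
Qed.

Let D := design_code F m.
Let o1 : (1 : F) != 0 := oner_neq0 F.
Definition fX (a c : F) : vec F := [ffun t => Tr m (a * (t + c) ^+ (3 ^ m + 1))].
Definition fQ (a : F) : vec F := [ffun t => Tr m (a * t ^+ (3 ^ m + 1))].
Definition fL (b : F) : vec F := [ffun t => Tr m (b * t)].
Definition fsq (f : vec F) : vec F := [ffun t => f t ^+ 2].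
Definition fone : vec F := [ffun => 1].

Lemma DS (a c : F) h : a ^+ (3 ^ m) = a -> a != 0 -> h != 0 ->
  [ffun t => (Tr m (a * (t + c) ^+ (3 ^ m + 1)) + h) ^+ 2] \in D.
Proof.
move=> aq a0 h0; apply: spanG; apply/imsetP.
set w := [ffun t => Tr m (a * (t + c) ^+ (3 ^ m + 1)) + h].
exists [set t | w t != 0].
  by apply/imsetP; exists w => //; apply: minw.
by apply/ffunP => t; rewrite !ffunE inE ffunE sqE.
Qed.

Lemma DX (a c : F) : a ^+ (3 ^ m) = a -> a != 0 -> fX a c \in D.
Proof.
move=> aq a0.
apply: span_eq (span_comb (fs := [:: (1, [ffun t => (Tr m (a * (t + c) ^+ (3 ^ m + 1)) + 1) ^+ 2]);
   (1 + 1, [ffun t => (Tr m (a * (t + c) ^+ (3 ^ m + 1)) + (1 + 1)) ^+ 2])]) _) _.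
  by allD; [exact: (@DS a c 1 aq a0 isT) | exact: (@DS a c (1 + 1) aq a0 isT)].
move=> t; rewrite /fX !ffunE !big_cons big_nil /= !ffunE; f3.
Qed.

Lemma D1 : fone \in D.
Proof.
have : leq 1 #|[set t : F | Tr m (1 * t ^+ (3 ^ m + 1)) == 1]|.
  by rewrite Zexact ?oner_eq0 ?expr1n // /Kf /= muln_gt0 expn_gt0 addn1.
move=> /card_gt0P [c0]; rewrite inE => /eqP hc0.
have a1 : (1 : F) ^+ (3 ^ m) = 1 by rewrite expr1n.
apply: span_eq (span_comb (fs := [:: (1 + 1, fX 1 c0); (1 + 1, fX 1 (- c0)); (1 + 1, fX 1 0)]) _) _.
  by allD; [exact: (DX c0 a1 o1) | exact: (DX (- c0) a1 o1) | exact: (DX 0 a1 o1)].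
move=> t; rewrite /fX /fone !ffunE !big_cons big_nil /= !ffunE !addr0 KEY ?expr1n // KEYm ?expr1n // hc0; f3.
Qed.

Lemma DX2 (a c : F) : a ^+ (3 ^ m) = a -> a != 0 -> fsq (fX a c) \in D.
Proof.
move=> aq a0.
apply: span_eq (span_comb (fs := [:: (1, [ffun t => (Tr m (a * (t + c) ^+ (3 ^ m + 1)) + 1) ^+ 2]);
   (1, fX a c); (1 + 1, fone)]) _) _.
  by allD; [exact: (@DS a c 1 aq a0 isT) | exact: (DX c aq a0) | exact: D1].
move=> t; rewrite /fX /fsq /fone !ffunE !big_cons big_nil /= !ffunE; f3.
Qed.

Lemma DQ (a : F) : a ^+ (3 ^ m) = a -> a != 0 -> fQ a \in D.
Proof.
move=> aq a0; apply: span_eq (DX 0 aq a0) _ => t.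
by rewrite /fX /fQ !ffunE addr0.
Qed.

Lemma DQ2 (a : F) : a ^+ (3 ^ m) = a -> fsq (fQ a) \in D.
Proof.
move=> aq; case: (eqVneq a 0) => [-> | a0].
  by apply: span_eq (span0 _) _ => t; rewrite /fsq /fQ !ffunE mul0r Tr0 expr0n.
apply: span_eq (DX2 0 aq a0) _ => t.
by rewrite /fX /fQ /fsq !ffunE addr0.
Qed.

Lemma DL (b : F) : fL b \in D.
Proof.
have a1 : (1 : F) ^+ (3 ^ m) = 1 by rewrite expr1n.
pose c := b ^+ (3 ^ m); have hc : c ^+ (3 ^ m) = b by rewrite expq_q.
apply: span_eq (span_comb (fs := [:: (1 + 1, fX 1 c); (1, fQ 1);
   (Tr m (1 * c ^+ (3 ^ m + 1)), fone)]) _) _.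
  by allD; [exact: (DX c a1 o1) | exact: (DQ a1 o1) | exact: D1].
move=> t; rewrite /fX /fQ /fL /fone !ffunE !big_cons big_nil /= !ffunE KEY // hc !mul1r; f3.
Qed.

Lemma DL2 (b : F) : fsq (fL b) \in D.
Proof.
have a1 : (1 : F) ^+ (3 ^ m) = 1 by rewrite expr1n.
pose c := b ^+ (3 ^ m); have hc : c ^+ (3 ^ m) = b by rewrite expq_q.
apply: span_eq (span_comb (fs := [:: (1 + 1, fsq (fX 1 c)); (1 + 1, fsq (fX 1 (- c)));
   (1 + 1, fsq (fQ 1)); (Tr m (1 * c ^+ (3 ^ m + 1)), fQ 1);
   ((1 + 1) * Tr m (1 * c ^+ (3 ^ m + 1)) ^+ 2, fone)]) _) _.
  by allD; [exact: (DX2 c a1 o1) | exact: (DX2 (- c) a1 o1) | exact: (DQ2 a1) | exact: (DQ a1 o1) | exact: D1].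
move=> t; rewrite /fX /fQ /fL /fsq /fone !ffunE !big_cons big_nil /= !ffunE KEY // KEYm // hc !mul1r; f3.
Qed.

Lemma DQL (a b : F) : a ^+ (3 ^ m) = a -> a != 0 ->
  [ffun t => Tr m (a * t ^+ (3 ^ m + 1)) * Tr m (b * t)] \in D.
Proof.
move=> aq a0.
pose c := (b / a) ^+ (3 ^ m); have hc : a * c ^+ (3 ^ m) = b by rewrite expq_q mulrC divfK.
apply: span_eq (span_comb (fs := [:: (1 + 1, fsq (fX a c)); (1, fsq (fX a (- c)));
   (- Tr m (a * c ^+ (3 ^ m + 1)), fL b)]) _) _.
  by allD; [exact: (DX2 c aq a0) | exact: (DX2 (- c) aq a0) | exact: DL].
move=> t; rewrite /fX /fL /fsq !ffunE !big_cons big_nil /= !ffunE KEY // KEYm // hc; f3.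
Qed.

Lemma DLL (b b' : F) : [ffun t => Tr m (b * t) * Tr m (b' * t)] \in D.
Proof.
apply: span_eq (span_comb (fs := [:: (1 + 1, fsq (fL (b + b'))); (1, fsq (fL b)); (1, fsq (fL b'))]) _) _.
  by allD; exact: DL2.
move=> t; rewrite /fL /fsq !ffunE !big_cons big_nil /= !ffunE [(b + b') * t]mulrDl TrD; f3.
Qed.

Lemma DQQ (a a' : F) : a ^+ (3 ^ m) = a -> a' ^+ (3 ^ m) = a' ->
  [ffun t => Tr m (a * t ^+ (3 ^ m + 1)) * Tr m (a' * t ^+ (3 ^ m + 1))] \in D.
Proof.
move=> aq aq'.
have aq2 : (a + a') ^+ (3 ^ m) = a + a' by rewrite frobk aq aq'.
apply: span_eq (span_comb (fs := [:: (1 + 1, fsq (fQ (a + a'))); (1, fsq (fQ a)); (1, fsq (fQ a'))]) _) _.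
  by allD; [exact: (DQ2 aq2) | exact: (DQ2 aq) | exact: (DQ2 aq')].
move=> t; rewrite /fQ /fsq !ffunE !big_cons big_nil /= !ffunE [(a + a') * _]mulrDl TrD; f3.
Qed.

Lemma dir2 : {subset gens F m <= D}.
Proof.
move=> f; rewrite inE => /orP [/orP [/orP [/orP [/orP [H|H]|H]|H]|H]|H].
- by move: H => /existsP [b /existsP [b' /eqP ->]]; apply: DLL.
- by move: H => /existsP [b /eqP ->]; apply: DL.
- by move: H => /existsP [a /existsP [b /and3P [/eqP aq a0 /eqP ->]]]; apply: DQL.
- by move: H => /existsP [a /existsP [a' /and5P [/eqP aq _ /eqP aq' _ /eqP ->]]]; apply: DQQ.
- by move: H => /existsP [a /and3P [/eqP aq a0 /eqP ->]]; apply: DQ.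
- by move: H => /eqP ->; apply: D1.
Qed.

Lemma main_eq : design_code F m = f3span (gens F m).
Proof.
apply/setP => f; apply/idP/idP.
  by move=> Hf; apply: (span_sub dir1); rewrite /design_code in Hf.
by move=> Hf; apply: (span_sub dir2).
Qed.
End Basics.


Unset Implicit Arguments.
Set Strict Implicit.

Theorem lemma3p10 (F : finFieldType) (m : nat) :
  (2 <= m)%N -> 3%N \in [pchar F] -> #|F| = (3 ^ (2 * m))%N ->
  design_code F m = f3span (gens F m).
Proof. move=> H1 H2 H3; exact: main_eq H1 H2 H3. Qed.
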